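(* Let $A$ be a $*$-algebra with $*$-calculus carrying an integrable almost complex structure, $E$ a finitely generated projective holomorphic left $A$-module with holomorphic structure $\overline\partial_E$, and $\langle\,,\,\rangle:E\otimes_A\overline E\to A$ a (non-degenerate) hermitian metric. There is a unique left connection $\nabla_E$ (the Chern connection) preserving the hermitian metric with $(\pi^{0,1}\otimes\mathrm{id})\nabla_E=\overline{\partial}_E$. Writing its Christoffel matrix as $\Gamma=\Gamma_++\Gamma_-$ with $\Gamma_+\in M_n(\Omega^{1,0})$, $\Gamma_-\in M_n(\Omega^{0,1})$, the part $\Gamma_-$ is determined by $\overline\partial_E$ and $$-\Gamma_+=\partial g^\bullet\cdot g_\bullet+g^\bullet\,(\Gamma_-)^*\,g_\bullet,$$ where $(\Gamma_-)^*$ is the conjugate transpose, $((\Gamma_-)^* )_{ij}=((\Gamma_-)_{ji})^*$, and $\partial g^\bullet$ is applied entrywise.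
   Context: Integrable almost complex structure: bimodule decomposition $\Omega^n=\oplus_{p+q=n}\Omega^{p,q}$, ${\rm d}=\partial+\overline\partial$ with $\partial:\Omega^{p,q}\to\Omega^{p+1,q}$, $\overline\partial:\Omega^{p,q}\to\Omega^{p,q+1}$, $\partial^2=\overline\partial^2=0$, $\wedge$ respecting bidegree, $*$ exchanging $\Omega^{1,0},\Omega^{0,1}$, projections $\pi^{p,q}$. Holomorphic module: $\overline\partial_E:E\to\Omega^{0,1}\otimes_AE$, $\overline\partial_E(a.e)=\overline\partial a\otimes e+a.\overline\partial_Ee$, $(\overline\partial\otimes\mathrm{id}-\mathrm{id}\wedge\overline\partial_E)\overline\partial_E=0$. Matrix formalism: fix a dual basis $e^i\in E$, $e_i\in E^\circ={}_A{\rm Hom}(E,A)$, $1\le i\le n$, with $e=\sum_i e_i(e)e^i$; $P_{ji}=e_i(e^j)$, so $P^2=P$. Christoffel symbols: $\Gamma^i_k=-(\mathrm{id}\otimes{\rm ev})(\nabla_Ee^i\otimes e_k)$, so $\nabla_Ee^i=-\Gamma^i_k\otimes e^k$, and $\Gamma_{ij}=\Gamma^i_j$; these satisfy $\Gamma P=\Gamma$. Metric: $g^{ij}=\langle e^i,\overline{e^j}\rangle$; the isomorphism $G:\overline E\to E^\circ$ with $\langle,\rangle={\rm ev}(\mathrm{id}\otimes G)$ has $G(\overline{e^i})=e_jg^{ji}$ and $G^{-1}(e_i)=\overline{g_{ij}e^j}$, normalised so that $g_{ij}P_{jk}=g_{ik}$; $g^\bullet=(g^{ij})$, $g_\bullet=(g_{ij})$,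 satisfying $g^{\bullet*}=g^\bullet$, $g_\bullet^*=g_\bullet$, $g^\bullet g_\bullet=P$, $g_\bullet P=g_\bullet$, $Pg^\bullet=g^\bullet$. A connection preserves the metric if ${\rm d}\langle e,\overline f\rangle=(\mathrm{id}\otimes\langle,\rangle)(\nabla_Ee\otimes\overline f)+(\langle,\rangle\otimes\mathrm{id})(e\otimes\tilde\nabla\overline f)$ with $\tilde\nabla(\overline f)=\overline g\otimes\kappa^*$ when $\nabla_Ef=\kappa\otimes g$. *)

(* Defs.v *)
(* Concrete "matrix formalism" model of a finitely
   generated projective holomorphic module over a *-algebra with an
   integrable almost complex structure (calculus truncated at degree 2). *)
From HB Require Import structures.
From mathcomp Require Import all_boot all_order all_algebra all_field.
Set Implicit Arguments. Unset Strict Implicit. Unset Printing Implicit Defensive.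
Import Order.TTheory GRing.Theory Num.Theory.
Local Open Scope ring_scope.

(* Data of a *-algebra A over C (= algC) with a *-differential calculus
   Omega^0 = A, Omega^1 = O1, Omega^2 = O2, and an almost complex
   structure given by the bidegree projections.                        *)
Record calc (A : algType algC) (O1 O2 : lmodType algC) := Calc {
  cstar : A -> A;
  lm1 : A -> O1 -> O1;  rm1 : O1 -> A -> O1;
  lm2 : A -> O2 -> O2;  rm2 : O2 -> A -> O2;
  d0 : A -> O1;  d1 : O1 -> O2;
  wedge : O1 -> O1 -> O2;
  star1 : O1 -> O1;  star2 : O2 -> O2;
  pi10 : O1 -> O1;  pi01 : O1 -> O1;
  pi20 : O2 -> O2;  pi11 : O2 -> O2;  pi02 : O2 -> O2
}.

Definition is_bimod (A : algType algC) (M : lmodType algC)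
    (lm : A -> M -> M) (rm : M -> A -> M) : Prop :=
     (forall a b w, lm (a + b) w = lm a w + lm b w)
  /\ (forall a w v, lm a (w + v) = lm a w + lm a v)
  /\ (forall a b w, rm w (a + b) = rm w a + rm w b)
  /\ (forall a w v, rm (w + v) a = rm w a + rm v a)
  /\ (forall a b w, lm (a * b) w = lm a (lm b w))
  /\ (forall a b w, rm w (a * b) = rm (rm w a) b)
  /\ (forall w, lm 1 w = w /\ rm w 1 = w)
  /\ (forall a b w, lm a (rm w b) = rm (lm a w) b)
  /\ (forall (c : algC) a w,
         [/\ lm (c *: a) w = c *: lm a w, lm a (c *: w) = c *: lm a w,
             rm w (c *: a) = c *: rm w a & rm (c *: w) a = c *: rm w a]).

Definition is_bimod_map (A : algType algC) (M : lmodType algC)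
    (lm : A -> M -> M) (rm : M -> A -> M) (f : M -> M) : Prop :=
  [/\ (forall (c : algC) w v, f (c *: w + v) = c *: f w + f v),
      (forall a w, f (lm a w) = lm a (f w)) &
      (forall a w, f (rm w a) = rm (f w) a)].

Definition is_star_map (A : algType algC) (M : lmodType algC)
    (sA : A -> A) (lm : A -> M -> M) (rm : M -> A -> M) (s : M -> M) : Prop :=
  [/\ (forall w v, s (w + v) = s w + s v),
      (forall (c : algC) w, s (c *: w) = c^* *: s w),
      (forall w, s (s w) = w),
      (forall a w, s (lm a w) = rm (s w) (sA a)) &
      (forall a w, s (rm w a) = lm (sA a) (s w))].

Record calc_ax (A : algType algC) (O1 O2 : lmodType algC)
    (C : calc A O1 O2) : Prop := CalcAx {
  ax_star_add : forall a b, cstar C (a + b) = cstar C a + cstar C b;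
  ax_star_scale : forall (c : algC) a, cstar C (c *: a) = c^* *: cstar C a;
  ax_star_mul : forall a b, cstar C (a * b) = cstar C b * cstar C a;
  ax_star_inv : forall a, cstar C (cstar C (a)) = a;
  ax_bimod1 : is_bimod (lm1 C) (rm1 C);
  ax_bimod2 : is_bimod (lm2 C) (rm2 C);
  ax_d0_lin : forall (c : algC) a b, d0 C (c *: a + b) = c *: d0 C a + d0 C b;
  ax_d1_lin : forall (c : algC) w v, d1 C (c *: w + v) = c *: d1 C w + d1 C v;
  ax_leibniz0 : forall a b, d0 C (a * b) = rm1 C (d0 C a) b + lm1 C a (d0 C b);
  ax_span1 : forall w : O1, exists s : seq (A * A),
      w = \sum_(p <- s) lm1 C p.1 (d0 C p.2);
  ax_dd : forall a, d1 C (d0 C a) = 0;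
  ax_wedge_addl : forall w w' v, wedge C (w + w') v = wedge C w v + wedge C w' v;
  ax_wedge_addr : forall w v v', wedge C w (v + v') = wedge C w v + wedge C w v';
  ax_wedge_scale : forall (c : algC) w v,
      wedge C (c *: w) v = c *: wedge C w v /\ wedge C w (c *: v) = c *: wedge C w v;
  ax_wedge_bal : forall w a v, wedge C (rm1 C w a) v = wedge C w (lm1 C a v);
  ax_wedge_lm : forall a w v, lm2 C a (wedge C w v) = wedge C (lm1 C a w) v;
  ax_wedge_rm : forall a w v, rm2 C (wedge C w v) a = wedge C w (rm1 C v a);
  ax_leibniz1l : forall a w, d1 C (lm1 C a w) = wedge C (d0 C a) w + lm2 C a (d1 C w);
  ax_leibniz1r : forall a w, d1 C (rm1 C w a) = rm2 C (d1 C w) a - wedge C w (d0 C a);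
  ax_span2 : forall x : O2, exists s : seq (O1 * O1),
      x = \sum_(p <- s) wedge C p.1 p.2;
  ax_star1 : is_star_map (cstar C) (lm1 C) (rm1 C) (star1 C);
  ax_star2 : is_star_map (cstar C) (lm2 C) (rm2 C) (star2 C);
  ax_star_d0 : forall a, star1 C (d0 C a) = d0 C (cstar C a);
  ax_star_d1 : forall w, star2 C (d1 C w) = d1 C (star1 C w);
  ax_star_wedge : forall w v,
      star2 C (wedge C w v) = - wedge C (star1 C v) (star1 C w);
  ax_pi10 : is_bimod_map (lm1 C) (rm1 C) (pi10 C);
  ax_pi01 : is_bimod_map (lm1 C) (rm1 C) (pi01 C);
  ax_pi20 : is_bimod_map (lm2 C) (rm2 C) (pi20 C);
  ax_pi11 : is_bimod_map (lm2 C) (rm2 C) (pi11 C);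
  ax_pi02 : is_bimod_map (lm2 C) (rm2 C) (pi02 C);
  ax_dec1 : forall w, pi10 C w + pi01 C w = w;
  ax_proj1 : forall w, [/\ pi10 C (pi10 C w) = pi10 C w, pi01 C (pi01 C w) = pi01 C w,
                           pi10 C (pi01 C w) = 0 & pi01 C (pi10 C w) = 0];
  ax_dec2 : forall x, pi20 C x + pi11 C x + pi02 C x = x;
  ax_proj2 : forall x,
      pi20 C (pi20 C x) = pi20 C x /\ pi11 C (pi11 C x) = pi11 C x
      /\ pi02 C (pi02 C x) = pi02 C x
      /\ pi20 C (pi11 C x) = 0 /\ pi20 C (pi02 C x) = 0 /\ pi11 C (pi20 C x) = 0
      /\ pi11 C (pi02 C x) = 0 /\ pi02 C (pi20 C x) = 0 /\ pi02 C (pi11 C x) = 0;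
  ax_star_pi1 : forall w, star1 C (pi10 C w) = pi01 C (star1 C w);
  ax_star_pi2 : forall x, star2 C (pi20 C x) = pi02 C (star2 C x)
                          /\ star2 C (pi11 C x) = pi11 C (star2 C x);
  ax_wedge_bideg : forall w v,
      [/\ pi20 C (wedge C (pi10 C w) (pi10 C v)) = wedge C (pi10 C w) (pi10 C v),
          pi11 C (wedge C (pi10 C w) (pi01 C v)) = wedge C (pi10 C w) (pi01 C v),
          pi11 C (wedge C (pi01 C w) (pi10 C v)) = wedge C (pi01 C w) (pi10 C v) &
          pi02 C (wedge C (pi01 C w) (pi01 C v)) = wedge C (pi01 C w) (pi01 C v)];
  (* integrability: d = del + delbar with the bidegrees *)
  ax_d_bideg : forall w, pi02 C (d1 C (pi10 C w)) = 0 /\ pi20 C (d1 C (pi01 C w)) = 0;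
  ax_del2 : forall a, pi20 C (d1 C (pi10 C (d0 C a))) = 0;
  ax_delbar2 : forall a, pi02 C (d1 C (pi01 C (d0 C a))) = 0
}.

Definition del (A : algType algC) (O1 O2 : lmodType algC) (C : calc A O1 O2)
  (a : A) : O1 := pi10 C (d0 C a).
Definition delbar (A : algType algC) (O1 O2 : lmodType algC) (C : calc A O1 O2)
  (a : A) : O1 := pi01 C (d0 C a).
Definition delbar1 (A : algType algC) (O1 O2 : lmodType algC) (C : calc A O1 O2)
  (w : O1) : O2 := pi02 C (d1 C w).

(* The f.g. projective module E = A^n P, P = P^2 (P_{ji} = e_i(e^j)).
   An element e of E is its coordinate row (e_i(e))_i, with e P = e.
   Omega^k (x)_A E = (Omega^k)^n P likewise.  e^i = i-th row of P.     *)
Section ModuleModel.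
Variables (A : algType algC) (O1 O2 : lmodType algC) (C : calc A O1 O2).
Variables (n : nat) (P : 'M[A]_n).

Definition in_E (v : 'I_n -> A) : Prop :=
  forall j, \sum_i v i * P i j = v j.
Definition in_OE (w : 'I_n -> O1) : Prop :=
  forall j, \sum_i rm1 C (w i) (P i j) = w j.
Definition ebasis (i : 'I_n) : 'I_n -> A := fun j => P i j.

Definition is_left_connection (nabla : ('I_n -> A) -> ('I_n -> O1)) : Prop :=
  [/\ (forall v, in_E v -> in_OE (nabla v)),
      (forall v w, in_E v -> in_E w -> forall j,
          nabla (fun k => v k + w k) j = nabla v j + nabla w j) &
      (forall a v, in_E v -> forall j,
          nabla (fun k => a * v k) j = rm1 C (d0 C a) (v j) + lm1 C a (nabla v j))].

Definition is_holomorphic (dE : ('I_n -> A) -> ('I_n -> O1)) : Prop :=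
  [/\ (forall v, in_E v -> in_OE (dE v) /\ forall j, pi01 C (dE v j) = dE v j),
      (forall v w, in_E v -> in_E w -> forall j,
          dE (fun k => v k + w k) j = dE v j + dE w j),
      (forall a v, in_E v -> forall j,
          dE (fun k => a * v k) j = rm1 C (delbar C a) (v j) + lm1 C a (dE v j)) &
      (* (delbar (x) id - id /\ delbar_E) delbar_E = 0 *)
      (forall v, in_E v -> forall j,
          \sum_k rm2 C (delbar1 C (dE v k)) (P k j)
          - \sum_k \sum_m rm2 C (wedge C (dE v k) (dE (ebasis k) m)) (P m j) = 0)].

(* h e f = < e , bar f > : non-degenerate hermitian metric *)
Definition is_hermitian_metric (h : ('I_n -> A) -> ('I_n -> A) -> A) : Prop :=
  [/\ (forall e e' f, in_E e -> in_E e' -> in_E f ->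
          h (fun k => e k + e' k) f = h e f + h e' f
          /\ h f (fun k => e k + e' k) = h f e + h f e'),
      (forall a e f, in_E e -> in_E f ->
          h (fun k => a * e k) f = a * h e f
          /\ h e (fun k => a * f k) = h e f * cstar C a),
      (forall e f, in_E e -> in_E f -> cstar C (h e f) = h f e) &
      (* G : bar E -> E^o,  bar f |-> < . , bar f >  is bijective *)
      (forall alpha : ('I_n -> A) -> A,
          (forall e e', in_E e -> in_E e' -> alpha (fun k => e k + e' k) = alpha e + alpha e') ->
          (forall a e, in_E e -> alpha (fun k => a * e k) = a * alpha e) ->
          exists f, [/\ in_E f, (forall e, in_E e -> alpha e = h e f) &
             (forall f', in_E f' -> (forall e, in_E e -> alpha e = h e f') ->
                 forall j, f' j = f j)])].

Definition gup (h : ('I_n -> A) -> ('I_n -> A) -> A) : 'M[A]_n :=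
  \matrix_(i, j) h (ebasis i) (ebasis j).

(* g_. : G^{-1}(e_i) = bar (g_{ij} e^j) with g_{ij} P_{jk} = g_{ik} *)
Definition is_glow (h : ('I_n -> A) -> ('I_n -> A) -> A) (gl : 'M[A]_n) : Prop :=
  forall i, in_E (fun j => gl i j) /\
            (forall e, in_E e -> h e (fun j => gl i j) = e i).

Definition preserves_metric (h : ('I_n -> A) -> ('I_n -> A) -> A)
    (nabla : ('I_n -> A) -> ('I_n -> O1)) : Prop :=
  forall e f, in_E e -> in_E f ->
    d0 C (h e f) = \sum_m rm1 C (nabla e m) (h (ebasis m) f)
                   + \sum_m lm1 C (h e (ebasis m)) (star1 C (nabla f m)).

Definition is_chern (dE : ('I_n -> A) -> ('I_n -> O1))
    (h : ('I_n -> A) -> ('I_n -> A) -> A) (nabla : ('I_n -> A) -> ('I_n -> O1)) : Prop :=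
  [/\ is_left_connection nabla, preserves_metric h nabla &
      (forall v, in_E v -> forall j, pi01 C (nabla v j) = dE v j)].

(* Christoffel symbols Gamma_{ik} = Gamma^i_k = -(id (x) ev)(nabla e^i (x) e_k) *)
Definition christoffel (nabla : ('I_n -> A) -> ('I_n -> O1)) (i k : 'I_n) : O1 :=
  - nabla (ebasis i) k.

End ModuleModel.

(* Main.v *)
Require Import Defs.
From HB Require Import structures.
From mathcomp Require Import all_boot all_order all_algebra all_field.
From Stdlib Require Import FunctionalExtensionality ClassicalEpsilon.
Set Implicit Arguments. Unset Strict Implicit. Unset Printing Implicit Defensive.
Import Order.TTheory GRing.Theory Num.Theory.
Local Open Scope ring_scope.
Lemma addf0 (U V : zmodType) (f : U -> V) :
  (forall x y, f (x + y) = f x + f y) -> f 0 = 0.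
Proof. by move=> fD; apply/(addrI (f 0)); rewrite -fD !addr0. Qed.
Lemma addfN (U V : zmodType) (f : U -> V) :
  (forall x y, f (x + y) = f x + f y) -> forall x, f (- x) = - f x.
Proof.
move=> fD x; apply/(addrI (f x)); rewrite -fD !subrr; exact: addf0.
Qed.
Lemma addfB (U V : zmodType) (f : U -> V) :
  (forall x y, f (x + y) = f x + f y) -> forall x y, f (x - y) = f x - f y.
Proof. by move=> fD x y; rewrite fD (addfN fD). Qed.
Lemma addf_sum (U V : zmodType) (f : U -> V) :
  (forall x y, f (x + y) = f x + f y) ->
  forall (I : Type) (r : seq I) (F : I -> U),
  f (\sum_(i <- r) F i) = \sum_(i <- r) f (F i).
Proof. by move=> fD I r F; apply: (big_morph f fD (addf0 fD)). Qed.

Section Basic.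
Variables (A : algType algC) (O1 O2 : lmodType algC) (C : calc A O1 O2).
Hypothesis HC : calc_ax C.

Lemma lmDl a b w : lm1 C (a + b) w = lm1 C a w + lm1 C b w.
Proof. move: (ax_bimod1 HC) => [H1 [H2 [H3 [H4 [H5 [H6 [H7 [H8 H9]]]]]]]]; exact: H1. Qed.
Lemma lmDr a w v : lm1 C a (w + v) = lm1 C a w + lm1 C a v.
Proof. move: (ax_bimod1 HC) => [H1 [H2 [H3 [H4 [H5 [H6 [H7 [H8 H9]]]]]]]]; exact: H2. Qed.
Lemma rmDr a b w : rm1 C w (a + b) = rm1 C w a + rm1 C w b.
Proof. move: (ax_bimod1 HC) => [H1 [H2 [H3 [H4 [H5 [H6 [H7 [H8 H9]]]]]]]]; exact: H3. Qed.
Lemma rmDl a w v : rm1 C (w + v) a = rm1 C w a + rm1 C v a.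
Proof. move: (ax_bimod1 HC) => [H1 [H2 [H3 [H4 [H5 [H6 [H7 [H8 H9]]]]]]]]; exact: H4. Qed.
Lemma lmM a b w : lm1 C (a * b) w = lm1 C a (lm1 C b w).
Proof. move: (ax_bimod1 HC) => [H1 [H2 [H3 [H4 [H5 [H6 [H7 [H8 H9]]]]]]]]; exact: H5. Qed.
Lemma rmM a b w : rm1 C w (a * b) = rm1 C (rm1 C w a) b.
Proof. move: (ax_bimod1 HC) => [H1 [H2 [H3 [H4 [H5 [H6 [H7 [H8 H9]]]]]]]]; exact: H6. Qed.
Lemma lm1w w : lm1 C 1 w = w.
Proof. move: (ax_bimod1 HC) => [H1 [H2 [H3 [H4 [H5 [H6 [H7 [H8 H9]]]]]]]]; exact: (proj1 (H7 w)). Qed.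
Lemma rm1w w : rm1 C w 1 = w.
Proof. move: (ax_bimod1 HC) => [H1 [H2 [H3 [H4 [H5 [H6 [H7 [H8 H9]]]]]]]]; exact: (proj2 (H7 w)). Qed.
Lemma lmrC a b w : lm1 C a (rm1 C w b) = rm1 C (lm1 C a w) b.
Proof. move: (ax_bimod1 HC) => [H1 [H2 [H3 [H4 [H5 [H6 [H7 [H8 H9]]]]]]]]; exact: H8. Qed.

Lemma pi10D w v : pi10 C (w + v) = pi10 C w + pi10 C v.
Proof. by move: (ax_pi10 HC) => [L _ _]; have := L 1 w v; rewrite !scale1r. Qed.
Lemma pi01D w v : pi01 C (w + v) = pi01 C w + pi01 C v.
Proof. by move: (ax_pi01 HC) => [L _ _]; have := L 1 w v; rewrite !scale1r. Qed.
Lemma pi10lm a w : pi10 C (lm1 C a w) = lm1 C a (pi10 C w).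
Proof. by move: (ax_pi10 HC) => [_ ? ?]. Qed.
Lemma pi10rm a w : pi10 C (rm1 C w a) = rm1 C (pi10 C w) a.
Proof. by move: (ax_pi10 HC) => [_ ? ?]. Qed.
Lemma pi01lm a w : pi01 C (lm1 C a w) = lm1 C a (pi01 C w).
Proof. by move: (ax_pi01 HC) => [_ ? ?]. Qed.
Lemma pi01rm a w : pi01 C (rm1 C w a) = rm1 C (pi01 C w) a.
Proof. by move: (ax_pi01 HC) => [_ ? ?]. Qed.
Lemma d0D a b : d0 C (a + b) = d0 C a + d0 C b.
Proof. by have := ax_d0_lin HC 1 a b; rewrite !scale1r. Qed.
Lemma starD w v : star1 C (w + v) = star1 C w + star1 C v.
Proof. by move: (ax_star1 HC) => [? ? ? ? ?]. Qed.
Lemma starK w : star1 C (star1 C w) = w.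
Proof. by move: (ax_star1 HC) => [? ? ? ? ?]. Qed.
Lemma star_lm a w : star1 C (lm1 C a w) = rm1 C (star1 C w) (cstar C a).
Proof. by move: (ax_star1 HC) => [? ? ? ? ?]. Qed.
Lemma star_rm a w : star1 C (rm1 C w a) = lm1 C (cstar C a) (star1 C w).
Proof. by move: (ax_star1 HC) => [? ? ? ? ?]. Qed.
Lemma cstarD a b : cstar C (a + b) = cstar C a + cstar C b.
Proof. exact: (ax_star_add HC). Qed.
Lemma cstarM a b : cstar C (a * b) = cstar C b * cstar C a.
Proof. exact: (ax_star_mul HC). Qed.
Lemma cstarK a : cstar C (cstar C a) = a.
Proof. exact: (ax_star_inv HC). Qed.
Lemma star_pi10 w : star1 C (pi10 C w) = pi01 C (star1 C w).
Proof. exact: (ax_star_pi1 HC). Qed.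
Lemma star_pi01 w : star1 C (pi01 C w) = pi10 C (star1 C w).
Proof. by rewrite -{1}(starK w) -star_pi10 starK. Qed.
Lemma star_d0 a : star1 C (d0 C a) = d0 C (cstar C a).
Proof. exact: (ax_star_d0 HC). Qed.
Lemma pi_dec w : pi10 C w + pi01 C w = w.
Proof. exact: (ax_dec1 HC). Qed.
Lemma pi01_10 w : pi01 C (pi10 C w) = 0.
Proof. by case: (ax_proj1 HC w). Qed.
Lemma pi10_01 w : pi10 C (pi01 C w) = 0.
Proof. by case: (ax_proj1 HC w). Qed.
Lemma pi01_01 w : pi01 C (pi01 C w) = pi01 C w.
Proof. by case: (ax_proj1 HC w). Qed.
Lemma pi10_10 w : pi10 C (pi10 C w) = pi10 C w.
Proof. by case: (ax_proj1 HC w). Qed.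

Lemma leib a b : d0 C (a * b) = rm1 C (d0 C a) b + lm1 C a (d0 C b).
Proof. exact: (ax_leibniz0 HC). Qed.
Lemma del_mul a b : pi10 C (d0 C (a * b)) =
  rm1 C (pi10 C (d0 C a)) b + lm1 C a (pi10 C (d0 C b)).
Proof. by rewrite leib pi10D pi10rm pi10lm. Qed.
Lemma delbar_mul a b : pi01 C (d0 C (a * b)) =
  rm1 C (pi01 C (d0 C a)) b + lm1 C a (pi01 C (d0 C b)).
Proof. by rewrite leib pi01D pi01rm pi01lm. Qed.
Lemma star_del a : star1 C (pi10 C (d0 C a)) = pi01 C (d0 C (cstar C a)).
Proof. by rewrite star_pi10 star_d0. Qed.
Lemma star_delbar a : star1 C (pi01 C (d0 C a)) = pi10 C (d0 C (cstar C a)).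
Proof. by rewrite star_pi01 star_d0. Qed.

Section Sums.
Variables (I : Type) (r : seq I).
Lemma lm_suml (F : I -> A) w : lm1 C (\sum_(i <- r) F i) w = \sum_(i <- r) lm1 C (F i) w.
Proof. exact: (addf_sum (f := fun a => lm1 C a w) (fun a b => lmDl a b w)). Qed.
Lemma lm_sumr (F : I -> O1) a : lm1 C a (\sum_(i <- r) F i) = \sum_(i <- r) lm1 C a (F i).
Proof. exact: (addf_sum (f := fun w => lm1 C a w) (fun w v => lmDr a w v)). Qed.
Lemma rm_sumr (F : I -> A) w : rm1 C w (\sum_(i <- r) F i) = \sum_(i <- r) rm1 C w (F i).
Proof. exact: (addf_sum (f := fun a => rm1 C w a) (fun a b => rmDr a b w)). Qed.
Lemma rm_suml (F : I -> O1) a : rm1 C (\sum_(i <- r) F i) a = \sum_(i <- r) rm1 C (F i) a.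
Proof. exact: (addf_sum (f := fun w => rm1 C w a) (fun w v => rmDl a w v)). Qed.
Lemma pi10_sum (F : I -> O1) : pi10 C (\sum_(i <- r) F i) = \sum_(i <- r) pi10 C (F i).
Proof. exact: (addf_sum (f := pi10 C) pi10D). Qed.
Lemma pi01_sum (F : I -> O1) : pi01 C (\sum_(i <- r) F i) = \sum_(i <- r) pi01 C (F i).
Proof. exact: (addf_sum (f := pi01 C) pi01D). Qed.
Lemma star_sum (F : I -> O1) : star1 C (\sum_(i <- r) F i) = \sum_(i <- r) star1 C (F i).
Proof. exact: (addf_sum (f := star1 C) starD). Qed.
Lemma d0_sum (F : I -> A) : d0 C (\sum_(i <- r) F i) = \sum_(i <- r) d0 C (F i).
Proof. exact: (addf_sum (f := d0 C) d0D). Qed.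
Lemma cstar_sum (F : I -> A) : cstar C (\sum_(i <- r) F i) = \sum_(i <- r) cstar C (F i).
Proof. exact: (addf_sum (f := cstar C) cstarD). Qed.
End Sums.

Lemma lmNl a w : lm1 C (- a) w = - lm1 C a w.
Proof. exact: (addfN (f := fun a => lm1 C a w) (fun a b => lmDl a b w)). Qed.
Lemma lmNr a w : lm1 C a (- w) = - lm1 C a w.
Proof. exact: (addfN (f := fun w => lm1 C a w) (fun w v => lmDr a w v)). Qed.
Lemma rmNr a w : rm1 C w (- a) = - rm1 C w a.
Proof. exact: (addfN (f := fun a => rm1 C w a) (fun a b => rmDr a b w)). Qed.
Lemma rmNl a w : rm1 C (- w) a = - rm1 C w a.
Proof. exact: (addfN (f := fun w => rm1 C w a) (fun w v => rmDl a w v)). Qed.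
Lemma pi10N w : pi10 C (- w) = - pi10 C w.
Proof. exact: (addfN pi10D). Qed.
Lemma pi01N w : pi01 C (- w) = - pi01 C w.
Proof. exact: (addfN pi01D). Qed.
Lemma starN w : star1 C (- w) = - star1 C w.
Proof. exact: (addfN starD). Qed.
Lemma pi10B w v : pi10 C (w - v) = pi10 C w - pi10 C v.
Proof. exact: (addfB pi10D). Qed.
Lemma pi01B w v : pi01 C (w - v) = pi01 C w - pi01 C v.
Proof. exact: (addfB pi01D). Qed.
Lemma starB w v : star1 C (w - v) = star1 C w - star1 C v.
Proof. exact: (addfB starD). Qed.
Lemma lm0l w : lm1 C 0 w = 0.
Proof. exact: (addf0 (f := fun a => lm1 C a w) (fun a b => lmDl a b w)). Qed.
Lemma rm0r w : rm1 C w 0 = 0.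
Proof. exact: (addf0 (f := fun a => rm1 C w a) (fun a b => rmDr a b w)). Qed.
End Basic.

Lemma rearr (V : zmodType) (t1 d x2 x5 t4 e : V) :
  (t1 + (d + x2) - x5) + (t4 + (e + x5) - x2) = (t1 + e) + (d + t4).
Proof.
rewrite (addrA t1) (addrAC (t1 + d)) (addrA t4) (addrAC (t4 + e)).
rewrite addrACA (addrACA (t1 + d)) -(addrA (t1 + d + (t4 + e))).
rewrite -opprD (addrC x2) addNr addr0.
rewrite -!addrA; congr (_ + _).
by rewrite (addrC t4) addrCA.
Qed.

Section Mod.
Variables (A : algType algC) (O1 O2 : lmodType algC) (C : calc A O1 O2).
Hypothesis HC : calc_ax C.
Variables (n : nat) (P : 'M[A]_n).
Hypothesis HP : P *m P = P.
Variable h : ('I_n -> A) -> ('I_n -> A) -> A.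
Hypothesis Hh : is_hermitian_metric C P h.
Variable dE : ('I_n -> A) -> ('I_n -> O1).
Hypothesis HdE : is_holomorphic C P dE.

Local Notation eb := (ebasis P).
Local Notation lmDl := (lmDl HC).
Local Notation lmDr := (lmDr HC).
Local Notation rmDr := (rmDr HC).
Local Notation rmDl := (rmDl HC).
Local Notation lmM := (lmM HC).
Local Notation rmM := (rmM HC).
Local Notation lm1w := (lm1w HC).
Local Notation rm1w := (rm1w HC).
Local Notation lmrC := (lmrC HC).
Local Notation pi10D := (pi10D HC).
Local Notation pi01D := (pi01D HC).
Local Notation pi10lm := (pi10lm HC).
Local Notation pi10rm := (pi10rm HC).
Local Notation pi01lm := (pi01lm HC).
Local Notation pi01rm := (pi01rm HC).
Local Notation d0D := (d0D HC).
Local Notation starD := (starD HC).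
Local Notation starK := (starK HC).
Local Notation star_lm := (star_lm HC).
Local Notation star_rm := (star_rm HC).
Local Notation cstarD := (cstarD HC).
Local Notation cstarM := (cstarM HC).
Local Notation cstarK := (cstarK HC).
Local Notation star_pi10 := (star_pi10 HC).
Local Notation star_pi01 := (star_pi01 HC).
Local Notation star_d0 := (star_d0 HC).
Local Notation pi_dec := (pi_dec HC).
Local Notation pi01_10 := (pi01_10 HC).
Local Notation pi10_01 := (pi10_01 HC).
Local Notation pi01_01 := (pi01_01 HC).
Local Notation pi10_10 := (pi10_10 HC).
Local Notation leib := (leib HC).
Local Notation del_mul := (del_mul HC).
Local Notation delbar_mul := (delbar_mul HC).
Local Notation star_del := (star_del HC).
Local Notation star_delbar := (star_delbar HC).
Local Notation lm_suml := (lm_suml HC).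
Local Notation lm_sumr := (lm_sumr HC).
Local Notation rm_sumr := (rm_sumr HC).
Local Notation rm_suml := (rm_suml HC).
Local Notation pi10_sum := (pi10_sum HC).
Local Notation pi01_sum := (pi01_sum HC).
Local Notation star_sum := (star_sum HC).
Local Notation d0_sum := (d0_sum HC).
Local Notation cstar_sum := (cstar_sum HC).
Local Notation lmNl := (lmNl HC).
Local Notation lmNr := (lmNr HC).
Local Notation rmNr := (rmNr HC).
Local Notation rmNl := (rmNl HC).
Local Notation pi10N := (pi10N HC).
Local Notation pi01N := (pi01N HC).
Local Notation starN := (starN HC).
Local Notation pi10B := (pi10B HC).
Local Notation pi01B := (pi01B HC).
Local Notation starB := (starB HC).
Local Notation lm0l := (lm0l HC).
Local Notation rm0r := (rm0r HC).

Lemma inE0 : in_E P (fun _ => 0).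
Proof. by move=> j; rewrite big1 // => i _; rewrite mul0r. Qed.
Lemma inE_add v w : in_E P v -> in_E P w -> in_E P (fun k => v k + w k).
Proof.
by move=> Hv Hw j; rewrite -(Hv j) -(Hw j) -big_split /=; apply: eq_bigr => i _; rewrite mulrDl.
Qed.
Lemma inE_scale a v : in_E P v -> in_E P (fun k => a * v k).
Proof. by move=> Hv j; rewrite -(Hv j) mulr_sumr; apply: eq_bigr => i _; rewrite mulrA. Qed.
Lemma inE_sum (I : Type) (r : seq I) (F : I -> 'I_n -> A) :
  (forall i, in_E P (F i)) -> in_E P (fun k => \sum_(i <- r) F i k).
Proof.
move=> HF; elim: r => [|a r IH].
  have -> : (fun k => \sum_(i <- [::]) F i k) = (fun _ => 0).
    by apply: functional_extensionality => k; rewrite big_nil.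
  exact: inE0.
have -> : (fun k => \sum_(i <- a :: r) F i k) = (fun k => F a k + \sum_(i <- r) F i k).
  by apply: functional_extensionality => k; rewrite big_cons.
exact: inE_add.
Qed.
Lemma inE_eb i : in_E P (eb i).
Proof. by move=> j; rewrite /ebasis; have := congr1 (fun M : 'M[A]_n => M i j) HP; rewrite mxE. Qed.
Lemma inE_decomp v : in_E P v -> v = (fun k => \sum_i v i * eb i k).
Proof. by move=> Hv; apply: functional_extensionality => k; rewrite Hv. Qed.

Lemma hDl e e' f : in_E P e -> in_E P e' -> in_E P f ->
  h (fun k => e k + e' k) f = h e f + h e' f.
Proof. by case: Hh => H _ _ _ ? ? ?; case: (H e e' f). Qed.
Lemma hDr e e' f : in_E P e -> in_E P e' -> in_E P f ->
  h f (fun k => e k + e' k) = h f e + h f e'.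
Proof. by case: Hh => H _ _ _ ? ? ?; case: (H e e' f). Qed.
Lemma hMl a e f : in_E P e -> in_E P f -> h (fun k => a * e k) f = a * h e f.
Proof. by case: Hh => _ H _ _ ? ?; case: (H a e f). Qed.
Lemma hMr a e f : in_E P e -> in_E P f -> h e (fun k => a * f k) = h e f * cstar C a.
Proof. by case: Hh => _ H _ _ ? ?; case: (H a e f). Qed.
Lemma hH e f : in_E P e -> in_E P f -> cstar C (h e f) = h f e.
Proof. by case: Hh => _ _ H _; apply: H. Qed.

Lemma h0l f : in_E P f -> h (fun _ => 0) f = 0.
Proof.
move=> Hf; have := hDl inE0 inE0 Hf.
have -> : (fun _ : 'I_n => (0 : A) + 0) = (fun _ => 0).
  by apply: functional_extensionality => k; rewrite addr0.
by move=> H; apply: (addrI (h (fun _ => 0) f)); rewrite -H addr0.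
Qed.
Lemma h0r f : in_E P f -> h f (fun _ => 0) = 0.
Proof.
move=> Hf; have := hDr inE0 inE0 Hf.
have -> : (fun _ : 'I_n => (0 : A) + 0) = (fun _ => 0).
  by apply: functional_extensionality => k; rewrite addr0.
by move=> H; apply: (addrI (h f (fun _ => 0))); rewrite -H addr0.
Qed.

Lemma h_suml (I : Type) (r : seq I) (F : I -> 'I_n -> A) f :
  (forall i, in_E P (F i)) -> in_E P f ->
  h (fun k => \sum_(i <- r) F i k) f = \sum_(i <- r) h (F i) f.
Proof.
move=> HF Hf; elim: r => [|a r IH].
  have -> : (fun k => \sum_(i <- [::]) F i k) = (fun _ => 0).
    by apply: functional_extensionality => k; rewrite big_nil.
  by rewrite big_nil h0l.
have -> : (fun k => \sum_(i <- a :: r) F i k) = (fun k => F a k + \sum_(i <- r) F i k).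
  by apply: functional_extensionality => k; rewrite big_cons.
by rewrite hDl // ?IH ?big_cons //; apply: inE_sum.
Qed.
Lemma h_sumr (I : Type) (r : seq I) (F : I -> 'I_n -> A) f :
  (forall i, in_E P (F i)) -> in_E P f ->
  h f (fun k => \sum_(i <- r) F i k) = \sum_(i <- r) h f (F i).
Proof.
move=> HF Hf; elim: r => [|a r IH].
  have -> : (fun k => \sum_(i <- [::]) F i k) = (fun _ => 0).
    by apply: functional_extensionality => k; rewrite big_nil.
  by rewrite big_nil h0r.
have -> : (fun k => \sum_(i <- a :: r) F i k) = (fun k => F a k + \sum_(i <- r) F i k).
  by apply: functional_extensionality => k; rewrite big_cons.
by rewrite hDr // ?IH ?big_cons //; apply: inE_sum.
Qed.
Lemma h_linl (c : 'I_n -> A) (F : 'I_n -> 'I_n -> A) f :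
  (forall i, in_E P (F i)) -> in_E P f ->
  h (fun k => \sum_i c i * F i k) f = \sum_i c i * h (F i) f.
Proof.
move=> HF Hf.
have := @h_suml _ (index_enum 'I_n) (fun i k => c i * F i k) f.
move=> /= -> //; last by move=> i; apply: inE_scale.
by apply: eq_bigr => i _; rewrite hMl.
Qed.
Lemma h_linr (c : 'I_n -> A) (F : 'I_n -> 'I_n -> A) f :
  (forall i, in_E P (F i)) -> in_E P f ->
  h f (fun k => \sum_i c i * F i k) = \sum_i h f (F i) * cstar C (c i).
Proof.
move=> HF Hf.
have := @h_sumr _ (index_enum 'I_n) (fun i k => c i * F i k) f.
move=> /= -> //; last by move=> i; apply: inE_scale.
by apply: eq_bigr => i _; rewrite hMr.
Qed.
Lemma hl_decomp v f : in_E P v -> in_E P f -> h v f = \sum_i v i * h (eb i) f.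
Proof. by move=> Hv Hf; rewrite {1}(inE_decomp Hv) h_linl // => i; apply: inE_eb. Qed.
Lemma hr_decomp v f : in_E P v -> in_E P f -> h f v = \sum_i h f (eb i) * cstar C (v i).
Proof. by move=> Hv Hf; rewrite {1}(inE_decomp Hv) h_linr // => i; apply: inE_eb. Qed.

Lemma dE_OE v : in_E P v -> in_OE C P (dE v).
Proof. by case: HdE => H _ _ _ /H []. Qed.
Lemma dE_01 v j : in_E P v -> pi01 C (dE v j) = dE v j.
Proof. by case: HdE => H _ _ _ /H [] _. Qed.
Lemma dED v w j : in_E P v -> in_E P w -> dE (fun k => v k + w k) j = dE v j + dE w j.
Proof. by case: HdE => _ H _ _ ? ?; apply: H. Qed.
Lemma dEM a v j : in_E P v -> dE (fun k => a * v k) j = rm1 C (delbar C a) (v j) + lm1 C a (dE v j).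
Proof. by case: HdE => _ _ H _ ?; apply: H. Qed.
Lemma dE0 j : dE (fun _ => 0) j = 0.
Proof.
have := dED j inE0 inE0.
have -> : (fun _ : 'I_n => (0 : A) + 0) = (fun _ => 0).
  by apply: functional_extensionality => k; rewrite addr0.
by move=> H; apply: (addrI (dE (fun _ => 0) j)); rewrite -H addr0.
Qed.
Lemma dE_sum (I : Type) (r : seq I) (F : I -> 'I_n -> A) j :
  (forall i, in_E P (F i)) ->
  dE (fun k => \sum_(i <- r) F i k) j = \sum_(i <- r) dE (F i) j.
Proof.
move=> HF; elim: r => [|a r IH].
  have -> : (fun k => \sum_(i <- [::]) F i k) = (fun _ => 0).
    by apply: functional_extensionality => k; rewrite big_nil.
  by rewrite big_nil dE0.
have -> : (fun k => \sum_(i <- a :: r) F i k) = (fun k => F a k + \sum_(i <- r) F i k).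
  by apply: functional_extensionality => k; rewrite big_cons.
by rewrite dED // ?IH ?big_cons //; apply: inE_sum.
Qed.
Lemma dE_lin (c : 'I_n -> A) (F : 'I_n -> 'I_n -> A) j :
  (forall i, in_E P (F i)) ->
  dE (fun k => \sum_i c i * F i k) j
  = \sum_i (rm1 C (delbar C (c i)) (F i j) + lm1 C (c i) (dE (F i) j)).
Proof.
move=> HF.
have := @dE_sum _ (index_enum 'I_n) (fun i k => c i * F i k) j.
move=> /= -> //; last by move=> i; apply: inE_scale.
by apply: eq_bigr => i _; rewrite dEM.
Qed.


Variable gl : 'M[A]_n.
Hypothesis Hgl : is_glow P h gl.
Definition glr k := fun j => gl k j.

Lemma inE_gl k : in_E P (glr k).
Proof. by case: (Hgl k). Qed.
Lemma h_gl e k : in_E P e -> h e (glr k) = e k.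
Proof. by case: (Hgl k) => _ H /H. Qed.
Lemma gl_herm k l : cstar C (gl k l) = gl l k.
Proof.
have := hH (inE_gl k) (inE_gl l).
by rewrite (h_gl l (inE_gl k)) (h_gl k (inE_gl l)).
Qed.
Lemma h_gl_l m f : in_E P f -> h (glr m) f = cstar C (f m).
Proof. by move=> Hf; rewrite -hH //; [rewrite (h_gl m Hf) | apply: inE_gl]. Qed.
Lemma sum_gl e l : in_E P e -> \sum_m h e (eb m) * gl m l = e l.
Proof.
move=> He; rewrite -(h_gl l He).
have -> : glr l = (fun j => \sum_m cstar C (gl m l) * eb m j).
  apply: functional_extensionality => j; rewrite -(inE_gl l j) /glr.
  by apply: eq_bigr => m _; rewrite gl_herm.
rewrite h_linr //; last by move=> i; apply: inE_eb.
by apply: eq_bigr => m _; rewrite cstarK.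
Qed.
Lemma sum_gl_H m f : in_E P f -> \sum_l gl m l * h (eb l) f = cstar C (f m).
Proof. by move=> Hf; rewrite -h_gl_l // (hl_decomp (inE_gl m) Hf). Qed.
Lemma gl_decomp e : in_E P e -> e = (fun j => \sum_m h e (eb m) * gl m j).
Proof. by move=> He; apply: functional_extensionality => j; rewrite sum_gl. Qed.

Lemma chern_pi10 nabla : is_chern C P dE h nabla -> forall v, in_E P v -> forall k,
  pi10 C (nabla v k) = pi10 C (d0 C (v k))
     - \sum_m lm1 C (h v (eb m)) (star1 C (dE (glr k) m)).
Proof.
rewrite /is_chern /is_left_connection => -[[HOE _ _] Hmet H01] v Hv k.
have := Hmet v (glr k) Hv (inE_gl k).
rewrite h_gl // => /(congr1 (pi10 C)); rewrite pi10D !pi10_sum => ->.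
have -> : \sum_m pi10 C (rm1 C (nabla v m) (h (eb m) (glr k))) = pi10 C (nabla v k).
  rewrite -(HOE v Hv k) pi10_sum; apply: eq_bigr => m _.
  by rewrite h_gl //; apply: inE_eb.
have -> : \sum_m pi10 C (lm1 C (h v (eb m)) (star1 C (nabla (glr k) m)))
  = \sum_m lm1 C (h v (eb m)) (star1 C (dE (glr k) m)).
  apply: eq_bigr => m _.
  by rewrite pi10lm -star_pi01 H01 //; apply: inE_gl.
by rewrite addrK.
Qed.


Lemma chern_unique nabla nabla' : is_chern C P dE h nabla -> is_chern C P dE h nabla' ->
  forall v, in_E P v -> forall j, nabla v j = nabla' v j.
Proof.
move=> Hn Hn' v Hv j.
rewrite -[LHS]pi_dec -[RHS]pi_dec (chern_pi10 Hn Hv) (chern_pi10 Hn' Hv).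
case: Hn => _ _ H1; case: Hn' => _ _ H2.
by rewrite H1 // H2.
Qed.

Lemma chern_chris_a nabla : is_chern C P dE h nabla ->
  forall i k, pi01 C (christoffel P nabla i k) = - dE (eb i) k.
Proof.
by move=> Hn i k; rewrite /christoffel pi01N; case: Hn => _ _ ->; last exact: inE_eb.
Qed.

Lemma dE_glr k m : dE (glr k) m
   = \sum_l (rm1 C (delbar C (gl k l)) (eb l m) + lm1 C (gl k l) (dE (eb l) m)).
Proof.
by rewrite {1}(inE_decomp (inE_gl k)) dE_lin // => l; apply: inE_eb.
Qed.

Lemma star_dE_glr k m : star1 C (dE (glr k) m)
   = \sum_l (lm1 C (cstar C (P l m)) (pi10 C (d0 C (gl l k)))
             + rm1 C (star1 C (dE (eb l) m)) (gl l k)).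
Proof.
rewrite dE_glr star_sum; apply: eq_bigr => l _.
by rewrite starD star_rm star_lm /delbar star_delbar !gl_herm.
Qed.

Lemma chern_chris_b nabla : is_chern C P dE h nabla -> forall i k,
  - pi10 C (christoffel P nabla i k)
  = \sum_j rm1 C (del C (gup P h i j)) (gl j k)
    + \sum_j \sum_l lm1 C (gup P h i j)
          (rm1 C (star1 C (pi01 C (christoffel P nabla l j))) (gl l k)).
Proof.
move=> Hn i k.
rewrite /christoffel pi10N opprK (chern_pi10 Hn (inE_eb i)).
have E1 : \sum_j \sum_l lm1 C (gup P h i j)
          (rm1 C (star1 C (pi01 C (- nabla (eb l) j))) (gl l k))
   = - \sum_j \sum_l lm1 C (h (eb i) (eb j))
          (rm1 C (star1 C (dE (eb l) j)) (gl l k)).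
  rewrite -sumrN; apply: eq_bigr => j _; rewrite -sumrN; apply: eq_bigr => l _.
  rewrite pi01N; case: Hn => _ _ ->; last exact: inE_eb.
  by rewrite starN rmNl lmNr mxE.
rewrite E1.
have E2 : \sum_j rm1 C (del C (gup P h i j)) (gl j k)
   = \sum_j rm1 C (pi10 C (d0 C (h (eb i) (eb j)))) (gl j k).
  by apply: eq_bigr => j _; rewrite mxE.
rewrite E2.
have E3 : pi10 C (d0 C (eb i k)) =
   \sum_l rm1 C (pi10 C (d0 C (h (eb i) (eb l)))) (gl l k)
   + \sum_l lm1 C (h (eb i) (eb l)) (pi10 C (d0 C (gl l k))).
  rewrite -{1}(sum_gl k (inE_eb i)) d0_sum pi10_sum -big_split /=.
  by apply: eq_bigr => l _; rewrite del_mul.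
rewrite E3.
have E4 : \sum_m lm1 C (h (eb i) (eb m)) (star1 C (dE (glr k) m))
   = \sum_l lm1 C (h (eb i) (eb l)) (pi10 C (d0 C (gl l k)))
     + \sum_m \sum_l lm1 C (h (eb i) (eb m)) (rm1 C (star1 C (dE (eb l) m)) (gl l k)).
  have -> : \sum_m lm1 C (h (eb i) (eb m)) (star1 C (dE (glr k) m))
    = \sum_m \sum_l lm1 C (h (eb i) (eb m) * cstar C (P l m)) (pi10 C (d0 C (gl l k)))
      + \sum_m \sum_l lm1 C (h (eb i) (eb m)) (rm1 C (star1 C (dE (eb l) m)) (gl l k)).
    rewrite -big_split /=; apply: eq_bigr => m _.
    rewrite star_dE_glr lm_sumr -big_split /=; apply: eq_bigr => l _.
    by rewrite lmDr lmM.
  congr (_ + _); rewrite exchange_big /=; apply: eq_bigr => l _.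
  rewrite -lm_suml; congr (lm1 C _ _).
  by rewrite (hr_decomp (inE_eb l) (inE_eb i)).
rewrite E4.
by rewrite opprD addrA addrK.
Qed.

Lemma lm0r a : lm1 C a 0 = 0.
Proof. exact: (addf0 (f := fun w => lm1 C a w) (fun w v => lmDr a w v)). Qed.

Definition Nf (v : 'I_n -> A) (k : 'I_n) : O1 :=
  pi10 C (d0 C (v k)) + dE v k
  - \sum_m lm1 C (h v (eb m)) (star1 C (dE (glr k) m)).
Definition nab (v : 'I_n -> A) (j : 'I_n) : O1 := \sum_k rm1 C (Nf v k) (P k j).

Lemma nab_OE v : in_OE C P (nab v).
Proof.
move=> l; rewrite /nab.
under eq_bigr => j _ do rewrite rm_suml.
rewrite exchange_big /=; apply: eq_bigr => k _.
under eq_bigr => j _ do rewrite -rmM.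
by rewrite -rm_sumr (inE_eb k l).
Qed.

Lemma Nf_add v w k : in_E P v -> in_E P w ->
  Nf (fun k => v k + w k) k = Nf v k + Nf w k.
Proof.
move=> Hv Hw; rewrite /Nf d0D pi10D dED //.
have -> : \sum_m lm1 C (h (fun k0 : 'I_n => v k0 + w k0) (eb m)) (star1 C (dE (glr k) m))
  = \sum_m lm1 C (h v (eb m)) (star1 C (dE (glr k) m))
    + \sum_m lm1 C (h w (eb m)) (star1 C (dE (glr k) m)).
  rewrite -big_split /=; apply: eq_bigr => m _.
  by rewrite hDl ?lmDl //; apply: inE_eb.
set a := pi10 C _; set b := pi10 C _; set c := dE v k; set d := dE w k.
set x := \sum_m _; set y := \sum_m _.
by rewrite opprD [RHS]addrACA (addrACA a).
Qed.

Lemma Nf_mul a v k : in_E P v ->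
  Nf (fun k => a * v k) k = rm1 C (d0 C a) (v k) + lm1 C a (Nf v k).
Proof.
move=> Hv; rewrite /Nf del_mul dEM //.
have -> : \sum_m lm1 C (h (fun k0 : 'I_n => a * v k0) (eb m)) (star1 C (dE (glr k) m))
   = lm1 C a (\sum_m lm1 C (h v (eb m)) (star1 C (dE (glr k) m))).
  rewrite lm_sumr; apply: eq_bigr => m _.
  by rewrite hMl ?lmM //; apply: inE_eb.
rewrite !lmDr lmNr !addrA; congr (_ - _).
have -> : rm1 C (d0 C a) (v k) = rm1 C (pi10 C (d0 C a)) (v k) + rm1 C (pi01 C (d0 C a)) (v k).
  by rewrite -rmDl pi_dec.
rewrite /delbar.
set p := rm1 C (pi10 C _) _; set q := rm1 C (pi01 C _) _.
set r := lm1 C a (pi10 C _); set s := lm1 C a (dE v k).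
by rewrite (addrAC p).
Qed.

Lemma nab_add v w j : in_E P v -> in_E P w ->
  nab (fun k => v k + w k) j = nab v j + nab w j.
Proof.
move=> Hv Hw; rewrite /nab -big_split /=; apply: eq_bigr => k _.
by rewrite Nf_add // rmDl.
Qed.

Lemma nab_mul a v j : in_E P v ->
  nab (fun k => a * v k) j = rm1 C (d0 C a) (v j) + lm1 C a (nab v j).
Proof.
move=> Hv; rewrite /nab.
under eq_bigr => k _ do rewrite Nf_mul // rmDl -rmM -lmrC.
by rewrite big_split /= -rm_sumr Hv lm_sumr.
Qed.

Lemma Nf_01 v k : in_E P v -> pi01 C (Nf v k) = dE v k.
Proof.
move=> Hv; rewrite /Nf pi01B pi01D pi01_10 add0r dE_01 // pi01_sum big1 ?subr0 //.
move=> m _; rewrite pi01lm -(dE_01 m (inE_gl k)) star_pi01 pi01_10.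
exact: lm0r.
Qed.

Lemma nab_01 v j : in_E P v -> pi01 C (nab v j) = dE v j.
Proof.
move=> Hv; rewrite /nab pi01_sum -(dE_OE Hv j); apply: eq_bigr => k _.
by rewrite pi01rm Nf_01.
Qed.


Lemma metricN e f : in_E P e -> in_E P f ->
  d0 C (h e f) = \sum_k rm1 C (Nf e k) (h (eb k) f)
               + \sum_k lm1 C (h e (eb k)) (star1 C (Nf f k)).
Proof.
move=> He Hf.
have SA : \sum_k rm1 C (Nf e k) (h (eb k) f)
  = \sum_k rm1 C (pi10 C (d0 C (e k))) (h (eb k) f)
    + \sum_k rm1 C (dE e k) (h (eb k) f)
    - \sum_k \sum_m lm1 C (h e (eb m)) (rm1 C (star1 C (dE (glr k) m)) (h (eb k) f)).
  rewrite -big_split -sumrB /=; apply: eq_bigr => k _.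
  rewrite /Nf rmDl rmDl rmNl rm_suml; congr (_ - _).
  by apply: eq_bigr => m _; rewrite lmrC.
have SB : \sum_k lm1 C (h e (eb k)) (star1 C (Nf f k))
  = \sum_k lm1 C (h e (eb k)) (pi01 C (d0 C (cstar C (f k))))
    + \sum_k lm1 C (h e (eb k)) (star1 C (dE f k))
    - \sum_k \sum_l lm1 C (h e (eb k)) (rm1 C (dE (glr k) l) (h (eb l) f)).
  rewrite -big_split -sumrB /=; apply: eq_bigr => k _.
  rewrite /Nf starB starD star_del lmDr lmDr lmNr star_sum lm_sumr; congr (_ - _).
  apply: eq_bigr => l _; rewrite star_lm starK hH //; exact: inE_eb.
have Ef : forall m, star1 C (dE f m)
   = \sum_l (lm1 C (gl m l) (pi10 C (d0 C (h (eb l) f)))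
             + rm1 C (star1 C (dE (glr l) m)) (h (eb l) f)).
  move=> m; rewrite {1}(gl_decomp Hf) (@dE_lin _ glr) ?star_sum; last exact: inE_gl.
  apply: eq_bigr => l _.
  rewrite starD star_rm star_lm /delbar star_delbar !hH //; last exact: inE_eb.
  by rewrite gl_herm.
have SC : \sum_k lm1 C (h e (eb k)) (star1 C (dE f k))
   = \sum_l lm1 C (e l) (pi10 C (d0 C (h (eb l) f)))
     + \sum_m \sum_l lm1 C (h e (eb m)) (rm1 C (star1 C (dE (glr l) m)) (h (eb l) f)).
  have -> : \sum_k lm1 C (h e (eb k)) (star1 C (dE f k))
     = \sum_m \sum_l lm1 C (h e (eb m) * gl m l) (pi10 C (d0 C (h (eb l) f)))
     + \sum_m \sum_l lm1 C (h e (eb m)) (rm1 C (star1 C (dE (glr l) m)) (h (eb l) f)).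
    rewrite -big_split /=; apply: eq_bigr => m _.
    rewrite Ef lm_sumr -big_split /=; apply: eq_bigr => l _.
    by rewrite lmDr lmM.
  congr (_ + _); rewrite exchange_big /=; apply: eq_bigr => l _.
  by rewrite -lm_suml sum_gl.
have Ee : forall l, dE e l
   = \sum_m (rm1 C (delbar C (h e (eb m))) (gl m l) + lm1 C (h e (eb m)) (dE (glr m) l)).
  move=> l; rewrite {1}(gl_decomp He) (@dE_lin _ glr) //; exact: inE_gl.
have SD : \sum_k rm1 C (dE e k) (h (eb k) f)
   = \sum_m rm1 C (pi01 C (d0 C (h e (eb m)))) (cstar C (f m))
     + \sum_l \sum_m lm1 C (h e (eb m)) (rm1 C (dE (glr m) l) (h (eb l) f)).
  have -> : \sum_k rm1 C (dE e k) (h (eb k) f)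
     = \sum_l \sum_m rm1 C (pi01 C (d0 C (h e (eb m)))) (gl m l * h (eb l) f)
     + \sum_l \sum_m lm1 C (h e (eb m)) (rm1 C (dE (glr m) l) (h (eb l) f)).
    rewrite -big_split /=; apply: eq_bigr => l _.
    rewrite Ee rm_suml -big_split /=; apply: eq_bigr => m _.
    by rewrite rmDl rmM lmrC.
  congr (_ + _); rewrite exchange_big /=; apply: eq_bigr => m _.
  by rewrite -rm_sumr sum_gl_H.
have SE : \sum_k \sum_m lm1 C (h e (eb m)) (rm1 C (star1 C (dE (glr k) m)) (h (eb k) f))
   = \sum_m \sum_l lm1 C (h e (eb m)) (rm1 C (star1 C (dE (glr l) m)) (h (eb l) f)).
  by rewrite exchange_big.
have SF : \sum_k \sum_l lm1 C (h e (eb k)) (rm1 C (dE (glr k) l) (h (eb l) f))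
   = \sum_l \sum_m lm1 C (h e (eb m)) (rm1 C (dE (glr m) l) (h (eb l) f)).
  by rewrite exchange_big.
have P10 : pi10 C (d0 C (h e f))
   = \sum_k rm1 C (pi10 C (d0 C (e k))) (h (eb k) f)
     + \sum_l lm1 C (e l) (pi10 C (d0 C (h (eb l) f))).
  rewrite (hl_decomp He Hf) d0_sum pi10_sum -big_split /=.
  by apply: eq_bigr => k _; rewrite del_mul.
have P01 : pi01 C (d0 C (h e f))
   = \sum_m rm1 C (pi01 C (d0 C (h e (eb m)))) (cstar C (f m))
     + \sum_k lm1 C (h e (eb k)) (pi01 C (d0 C (cstar C (f k)))).
  rewrite (hr_decomp Hf He) d0_sum pi01_sum -big_split /=.
  by apply: eq_bigr => k _; rewrite delbar_mul.
rewrite SA SB SC SD SE SF -[LHS]pi_dec P10 P01.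
by rewrite rearr.
Qed.

Lemma nab_metric : preserves_metric C P h nab.
Proof.
move=> e f He Hf; rewrite metricN //; congr (_ + _); symmetry.
  rewrite /nab.
  under eq_bigr => m _ do rewrite rm_suml.
  rewrite exchange_big /=; apply: eq_bigr => k _.
  under eq_bigr => m _ do rewrite -rmM.
  by rewrite -rm_sumr -hl_decomp //; apply: inE_eb.
rewrite /nab.
under eq_bigr => m _ do rewrite star_sum lm_sumr.
rewrite exchange_big /=; apply: eq_bigr => k _.
under eq_bigr => m _ do rewrite star_rm -lmM.
by rewrite -lm_suml -hr_decomp //; apply: inE_eb.
Qed.

Lemma nab_chern : is_chern C P dE h nab.
Proof.
split; [split | exact: nab_metric | ].
- by move=> v _; apply: nab_OE.
- by move=> v w Hv Hw j; apply: nab_add.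
- by move=> a v Hv j; apply: nab_mul.
- by move=> v Hv j; apply: nab_01.
Qed.

End Mod.

Unset Implicit Arguments.

Theorem mainTheorem12 (A : algType algC) (O1 O2 : lmodType algC)
  (C : calc A O1 O2) (HC : calc_ax C)
  (n : nat) (P : 'M[A]_n) (HP : P *m P = P)
  (dE : ('I_n -> A) -> ('I_n -> O1)) (HdE : is_holomorphic C P dE)
  (h : ('I_n -> A) -> ('I_n -> A) -> A) (Hh : is_hermitian_metric C P h) :
  (* existence and uniqueness of the Chern connection *)
  (exists nabla, is_chern C P dE h nabla) /\
  (forall nabla nabla', is_chern C P dE h nabla -> is_chern C P dE h nabla' ->
     forall v, in_E P v -> forall j, nabla v j = nabla' v j) /\
  (* its Christoffel symbols *)
  (forall nabla, is_chern C P dE h nabla ->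
   forall gl : 'M[A]_n, is_glow P h gl ->
     (forall i k, pi01 C (christoffel P nabla i k) = - dE (ebasis P i) k) /\
     (forall i k,
        - pi10 C (christoffel P nabla i k)
        = \sum_j rm1 C (del C (gup P h i j)) (gl j k)
          + \sum_j \sum_l lm1 C (gup P h i j)
                (rm1 C (star1 C (pi01 C (christoffel P nabla l j))) (gl l k)))).
Proof.
have ex : forall i : 'I_n, {f | in_E P f /\ forall e, in_E P e -> h e f = e i}.
  move=> i; apply: constructive_indefinite_description.
  case: Hh => _ _ _ /(_ (fun e => e i)) [] //.
  move=> f [Hf Hal _]; exists f; split => // e He; by rewrite -Hal.
pose gl : 'M[A]_n := \matrix_(i, j) sval (ex i) j.
have Hgl : is_glow P h gl.
  move=> i.
  have -> : (fun j => gl i j) = sval (ex i).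
    by apply: functional_extensionality => j; rewrite mxE.
  by case: (svalP (ex i)).
split; first by eexists; exact: (nab_chern HC HP Hh HdE Hgl).
split; first by move=> nabla nabla' H1 H2 v Hv j; exact: (chern_unique HC HP Hgl H1 H2 Hv).
move=> nabla Hn gl' Hgl'; split.
  exact: (chern_chris_a HC HP Hn).
exact: (chern_chris_b HC HP Hh HdE Hgl' Hn).
Qed.
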